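(* Let $(M,J,c)$ be a conformal almost Hermitian structure of dimension $n\ge4$ and let $\nabla$ be an affine connection which is almost complex ($\nabla J=0$) and conformal (for each $g\in c$, $\nabla g=2B'\otimes g$ for some 1-form $B'$). Then $\nabla=\nabla^{gc}$ if and only if $V(\operatorname{Tor}\nabla)=0$.
   Context: Conformal almost Hermitian structure: $J$ with $J^2=-\mathrm{id}$, $c$ a conformal class of Riemannian metrics with $J$ orthogonal. For $g\in c$ with Levi-Civita $\nabla^{LC}$, $B_a:=\frac1{n-2}J^c{}_b\nabla^{LC}_cJ^b{}_a$ and $\nabla^c_aY^b:=\nabla^{LC}_aY^b-B_aY^b+B^bY_a-B_cY^c\delta^b_a$ (independent of $g\in c$). $G^c(X,Y):=-\frac12J(\nabla^c_YJ)X$ and $\nabla^{gc}_XY:=\nabla^c_XY+G^c(Y,X)$. For a $(1,2)$ tensor $T^a{}_{bc}$ skew in $b,c$ (torsion $T(X,Y)=D_XY-D_YX-[X,Y]=T^a{}_{bc}X^bY^c$), using any $g\in c$ to raise/lower indices define $A_d:=\frac1{n-2}\big(T^a{}_{ad}+\frac12J^a{}_cJ^b{}_d(T_a{}^c{}_b-T_{ba}{}^c-T^c{}_{ba})\big)$, $G^T_{abc}:=A_ag_{bc}-A_bg_{ac}-A_cg_{ab}+\frac12(T_{cab}-T_{abc}-T_{bca})$, regarded as a $(1,2)$ tensor $G^T(Y,X)=(G^T)^a{}_{bc}Y^bX^c$ (these are independent of $g\in c$), and $V(T)(Y,X):=JG^T(Y,X)+G^T(JY,X)$. *)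

(* Defs.v *)
(* Local coordinate formalization: the manifold is replaced by an open set U
   of R^n = 'rV[R]_n.  All tensors are given by
   their components in the coordinate frame (d/dx_0, ..., d/dx_{n-1}). *)
From HB Require Import structures.
From mathcomp Require Import all_boot all_order all_algebra.
From mathcomp Require Import all_classical all_reals all_analysis.
Set Implicit Arguments. Unset Strict Implicit. Unset Printing Implicit Defensive.
Import Order.TTheory GRing.Theory Num.Theory.
Import numFieldNormedType.Exports.
Local Open Scope ring_scope.

Section Defs.
Variables (R : realType) (n : nat).

Definition point := 'rV[R]_n.

(* Component fields of (1,2)-tensors / Christoffel symbols:
   Chr x a b c = Gamma^a_{bc}(x), with  D_{d_b} d_c = Gamma^a_{bc} d_a,
   i.e. (D_X Y)^a = X^b d_b Y^a + Gamma^a_{bc} X^b Y^c.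
   For a (1,2)-tensor T, T x a b c = T^a_{bc}(x). *)
Definition Chr := point -> 'I_n -> 'I_n -> 'I_n -> R.

Definition pd (f : point -> R) (k : 'I_n) (x : point) : R :=
  derive f x (delta_mx (0 : 'I_1) k).

(* J x a b = J^a_b(x) ; g x a b = g_{ab}(x) ; ginv = g^{ab} *)
Definition ginv (g : point -> 'M[R]_n) (x : point) : 'M[R]_n := invmx (g x).

Definition LC (g : point -> 'M[R]_n) : Chr := fun x a b c =>
  2^-1 * \sum_(d < n) ginv g x a d *
    (pd (fun y => g y d c) b x + pd (fun y => g y d b) c x
     - pd (fun y => g y b c) d x).

Definition covJ (G : Chr) (J : point -> 'M[R]_n) (x : point) (c a b : 'I_n) : R :=
  pd (fun y => J y a b) c x + \sum_(d < n) G x a c d * J x d b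
  - \sum_(d < n) G x d c b * J x a d.

Definition covg (G : Chr) (g : point -> 'M[R]_n) (x : point) (c a b : 'I_n) : R :=
  pd (fun y => g y a b) c x - \sum_(d < n) G x d c a * g x d b
  - \sum_(d < n) G x d c b * g x a d.

Definition Bform (g J : point -> 'M[R]_n) (x : point) (a : 'I_n) : R :=
  (n%:R - 2)^-1 * \sum_(b < n) \sum_(c < n) J x c b * covJ (LC g) J x c b a.

Definition Bup (g J : point -> 'M[R]_n) (x : point) (b : 'I_n) : R :=
  \sum_(e < n) ginv g x b e * Bform g J x e.

(* nabla^c_a Y^b = nabla^LC_a Y^b - B_a Y^b + B^b Y_a - B_d Y^d delta^b_a *)
Definition Gamma_c (g J : point -> 'M[R]_n) : Chr := fun x b a d =>
  LC g x b a d - Bform g J x a * (b == d)%:R + Bup g J x b * g x a d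
  - Bform g J x d * (b == a)%:R.

(* G^c(X,Y) = -1/2 J (nabla^c_Y J) X ; Gc x a b e = coefficient of X^b Y^e *)
Definition Gc (g J : point -> 'M[R]_n) : Chr := fun x a b e =>
  - 2^-1 * \sum_(f < n) J x a f * covJ (Gamma_c g J) J x e f b.

(* nabla^gc_X Y = nabla^c_X Y + G^c(Y,X) *)
Definition Gamma_gc (g J : point -> 'M[R]_n) : Chr := fun x a e b =>
  Gamma_c g J x a e b + Gc g J x a b e.

Definition torsion (G : Chr) : Chr := fun x a b c => G x a b c - G x a c b.

Definition Tlow (g : point -> 'M[R]_n) (T : Chr) (x : point) (a b c : 'I_n) : R :=
  \sum_(e < n) g x a e * T x e b c.

Definition Aform (g J : point -> 'M[R]_n) (T : Chr) (x : point) (d : 'I_n) : R :=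
  (n%:R - 2)^-1 *
  (\sum_(a < n) T x a a d +
   2^-1 * \sum_(a < n) \sum_(b < n) \sum_(c < n) J x a c * J x b d *
     ( \sum_(e < n) \sum_(f < n) g x a e * ginv g x c f * T x e f b
     - \sum_(e < n) \sum_(f < n) g x b e * T x e a f * ginv g x f c
     - T x c b a)).

Definition GTlow (g J : point -> 'M[R]_n) (T : Chr) (x : point) (a b c : 'I_n) : R :=
  Aform g J T x a * g x b c - Aform g J T x b * g x a c - Aform g J T x c * g x a b
  + 2^-1 * (Tlow g T x c a b - Tlow g T x a b c - Tlow g T x b c a).

(* (G^T)^a_{bc} = g^{ae} G^T_{ebc};  G^T(Y,X)^a = (G^T)^a_{bc} Y^b X^c *)
Definition GT (g J : point -> 'M[R]_n) (T : Chr) : Chr := fun x a b c =>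
  \sum_(e < n) ginv g x a e * GTlow g J T x e b c.

(* V(T)(Y,X) = J G^T(Y,X) + G^T(JY,X); components V^a_{bc} (coeff of Y^b X^c) *)
Definition VT (g J : point -> 'M[R]_n) (T : Chr) : Chr := fun x a b c =>
  \sum_(e < n) J x a e * GT g J T x e b c + \sum_(e < n) GT g J T x a e c * J x e b.

End Defs.

(* Main.v *)
Require Import Defs.
From HB Require Import structures.
From mathcomp Require Import all_boot all_order all_algebra.
From mathcomp Require Import all_classical all_reals all_analysis.
Import Order.TTheory GRing.Theory Num.Theory.
Import numFieldNormedType.Exports.
Local Open Scope ring_scope.

From mathcomp Require Import ring.
Set Implicit Arguments. Unset Strict Implicit. Unset Printing Implicit Defensive.


Section Alg.
Variables (R : numFieldType) (n : nat).
Implicit Types (F : 'I_n -> R).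

Lemma sum_delta_r F (b : 'I_n) : \sum_(d < n) F d * (d == b)%:R = F b.
Proof.
rewrite (bigD1 b) //= eqxx mulr1 big1 ?addr0 // => d /negbTE ->; by rewrite mulr0.
Qed.
Lemma sum_delta_l F (b : 'I_n) : \sum_(d < n) F d * (b == d)%:R = F b.
Proof. by under eq_bigr do rewrite eq_sym; rewrite sum_delta_r. Qed.
Lemma sum_delta_r' F (b : 'I_n) : \sum_(d < n) (d == b)%:R * F d = F b.
Proof. by under eq_bigr do rewrite mulrC; rewrite sum_delta_r. Qed.
Lemma sum_delta_l' F (b : 'I_n) : \sum_(d < n) (b == d)%:R * F d = F b.
Proof. by under eq_bigr do rewrite mulrC; rewrite sum_delta_l. Qed.

Variables (g gi J : 'M[R]_n).
Hypothesis hg : forall a b, g a b = g b a.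
Hypothesis hgis : forall a b, gi a b = gi b a.
Hypothesis hgig : forall a b, \sum_(d < n) gi a d * g d b = (a == b)%:R.
Hypothesis hggi : forall a b, \sum_(d < n) g a d * gi d b = (a == b)%:R.
Hypothesis hJJ : forall a b, \sum_(d < n) J a d * J d b = - (a == b)%:R.
Hypothesis hgJgi : forall e f, \sum_(c < n) (\sum_(a < n) g e a * J a c) * gi c f = - J f e.
Hypothesis hJgi : forall a b, \sum_(d < n) J a d * gi d b = - \sum_(d < n) J b d * gi d a.
Hypothesis hn2 : (n%:R - 2 : R) != 0.

Definition Aform' (T : 'I_n -> 'I_n -> 'I_n -> R) d := (n%:R - 2)^-1 *
  (\sum_(a < n) T a a d +
   2^-1 * \sum_(a < n) \sum_(b < n) \sum_(c < n) J a c * J b d *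
     ( \sum_(e < n) \sum_(f < n) g a e * gi c f * T e f b
     - \sum_(e < n) \sum_(f < n) g b e * T e a f * gi f c
     - T c b a)).
Definition Tl (T : 'I_n -> 'I_n -> 'I_n -> R) a b c := \sum_(e < n) g a e * T e b c.
Definition GTlow' T a b c := Aform' T a * g b c - Aform' T b * g a c - Aform' T c * g a b
  + 2^-1 * (Tl T c a b - Tl T a b c - Tl T b c a).
Definition GT' T a b c := \sum_(e < n) gi a e * GTlow' T e b c.

Variables (S : 'I_n -> 'I_n -> 'I_n -> R) (beta : 'I_n -> R).
Hypothesis hconf : forall c a b,
  \sum_(d < n) S d c a * g d b + \sum_(d < n) S d c b * g a d = 2 * beta c * g a b.

Definition KK e b c := \sum_(d < n) g e d * S d b c.

Lemma Kconf c a b : KK b c a + KK a c b = 2 * beta c * g a b.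
Proof.
rewrite -hconf /KK; congr (_ + _); apply: eq_bigr => d _; by rewrite mulrC hg.
Qed.

Lemma S_K a b c : S a b c = \sum_(w < n) gi a w * KK w b c.
Proof.
rewrite /KK; under eq_bigr do rewrite big_distrr /=.
rewrite exchange_big /=.
under eq_bigr do (under eq_bigr do rewrite mulrA; rewrite -big_distrl /= hgig).
by rewrite sum_delta_l'.
Qed.


Lemma trS d : \sum_(a < n) S a d a = n%:R * beta d.
Proof.
have e1 : \sum_(a < n) S a d a = \sum_(a < n) \sum_(w < n) gi a w * KK w d a.
  by apply: eq_bigr => a _; rewrite S_K.
have e2 : \sum_(a < n) \sum_(w < n) gi a w * KK w d a
        = \sum_(a < n) \sum_(w < n) gi a w * KK a d w.
  by rewrite exchange_big /=; apply: eq_bigr => a _; apply: eq_bigr => w _; rewrite hgis.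
have e3 : \sum_(a < n) \sum_(w < n) gi a w * KK w d a
        + \sum_(a < n) \sum_(w < n) gi a w * KK a d w = 2 * (n%:R * beta d).
  rewrite -big_split /=.
  under eq_bigr do rewrite -big_split /=.
  under eq_bigr do (under eq_bigr do rewrite -mulrDr Kconf).
  under eq_bigr do (under eq_bigr do rewrite [g _ _]hg mulrCA; rewrite -big_distrr /= hgig eqxx).
  rewrite -big_distrr /= sumr_const card_ord.
  idtac.
  ring.
rewrite e1; rewrite -e2 in e3.
have h2 : (2 : R) != 0 by rewrite pnatr_eq0.
apply: (mulfI h2); by rewrite -e3 mulr2n mulrDl mul1r.
Qed.


Lemma mv3 (F : 'I_n -> 'I_n -> 'I_n -> R) :
  \sum_(i < n) \sum_(j < n) \sum_(k < n) F i j k = \sum_(j < n) \sum_(k < n) \sum_(i < n) F i j k.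
Proof. rewrite [X in X = _]exchange_big; apply: eq_bigr => j _; by rewrite [X in X = _]exchange_big. Qed.
Lemma mv4 (F : 'I_n -> 'I_n -> 'I_n -> 'I_n -> R) :
  \sum_(i < n) \sum_(j < n) \sum_(k < n) \sum_(l < n) F i j k l
  = \sum_(j < n) \sum_(k < n) \sum_(l < n) \sum_(i < n) F i j k l.
Proof. rewrite [X in X = _]exchange_big; apply: eq_bigr => j _; by rewrite [X in X = _]mv3. Qed.
Lemma mv5 (F : 'I_n -> 'I_n -> 'I_n -> 'I_n -> 'I_n -> R) :
  \sum_(i < n) \sum_(j < n) \sum_(k < n) \sum_(l < n) \sum_(m < n) F i j k l m
  = \sum_(j < n) \sum_(k < n) \sum_(l < n) \sum_(m < n) \sum_(i < n) F i j k l m.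
Proof. rewrite [X in X = _]exchange_big; apply: eq_bigr => j _; by rewrite [X in X = _]mv4. Qed.

Definition TSS a b c := S a b c - S a c b.
Definition Jgi a f := \sum_(c < n) J a c * gi c f.
Definition YY d := \sum_(b < n) \sum_(c < n) \sum_(e < n) J c b * S b c e * J e d.

Lemma P2_stage1 d :
  \sum_(a < n) \sum_(b < n) \sum_(c < n) J a c * J b d *
     (\sum_(e < n) \sum_(f < n) g b e * TSS e a f * gi f c)
  = \sum_(a < n) \sum_(e < n) \sum_(f < n) Jgi a f * (\sum_(b < n) g e b * J b d) * TSS e a f.
Proof.
apply: eq_bigr => a _.
transitivity (\sum_(b < n) \sum_(c < n) \sum_(e < n) \sum_(f < n)
   J a c * J b d * (g b e * TSS e a f * gi f c)).
  apply: eq_bigr => b _; apply: eq_bigr => c _; rewrite big_distrr /=.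
  by apply: eq_bigr => e _; rewrite big_distrr.
transitivity (\sum_(e < n) \sum_(f < n) \sum_(c < n) \sum_(b < n)
   J a c * gi c f * (g e b * J b d) * TSS e a f); last first.
  apply: eq_bigr => e _; apply: eq_bigr => f _; rewrite /Jgi big_distrl big_distrl /=.
  by apply: eq_bigr => c _; rewrite big_distrr big_distrl.
rewrite [X in X = _]mv4 [X in X = _]mv4. apply: eq_bigr => e _. apply: eq_bigr => f _.
rewrite [X in X = _]exchange_big; apply: eq_bigr => c _; apply: eq_bigr => b _.
rewrite [g b e]hg [gi f c]hgis; ring.
Qed.


Lemma gJT_K d a f : \sum_(e < n) (\sum_(b < n) g e b * J b d) * TSS e a f
   = \sum_(h < n) J h d * (KK h a f - KK h f a).
Proof.
transitivity (\sum_(e < n) \sum_(b < n) g e b * J b d * TSS e a f).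
  by apply: eq_bigr => e _; rewrite big_distrl.
transitivity (\sum_(h < n) \sum_(e < n) J h d * (g h e * TSS e a f)); last first.
  apply: eq_bigr => h _; rewrite -big_distrr /=; congr (_ * _).
  by rewrite /KK /TSS -sumrB; apply: eq_bigr => e _; rewrite mulrBr.
rewrite [X in X = _]exchange_big; apply: eq_bigr => h _; apply: eq_bigr => e _.
rewrite [g e h]hg; ring.
Qed.

Definition QQ d := \sum_(a < n) \sum_(f < n) Jgi a f * \sum_(h < n) J h d * KK h a f.

Lemma P2_stage2 d :
  \sum_(a < n) \sum_(e < n) \sum_(f < n) Jgi a f * (\sum_(b < n) g e b * J b d) * TSS e a f
  = \sum_(a < n) \sum_(f < n) Jgi a f * \sum_(h < n) J h d * (KK h a f - KK h f a).
Proof.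
apply: eq_bigr => a _; rewrite [X in X = _]exchange_big; apply: eq_bigr => f _.
rewrite -gJT_K big_distrr; apply: eq_bigr => e _; by rewrite /= mulrA.
Qed.

Lemma P2_stage3 d :
  \sum_(a < n) \sum_(f < n) Jgi a f * \sum_(h < n) J h d * (KK h a f - KK h f a) = 2 * QQ d.
Proof.
set A := fun a f => \sum_(h < n) J h d * KK h a f.
transitivity (\sum_(a < n) \sum_(f < n) Jgi a f * A a f - \sum_(a < n) \sum_(f < n) Jgi a f * A f a).
  rewrite -sumrB; apply: eq_bigr => a _; rewrite -sumrB; apply: eq_bigr => f _.
  by rewrite -mulrBr /A -sumrB; congr (_ * _); apply: eq_bigr => h _; rewrite mulrBr.
have -> : \sum_(a < n) \sum_(f < n) Jgi a f * A f a = - \sum_(a < n) \sum_(f < n) Jgi a f * A a f.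
  rewrite exchange_big -sumrN; apply: eq_bigr => a _; rewrite -sumrN; apply: eq_bigr => f _.
  by rewrite /Jgi hJgi mulNr.
by rewrite /QQ opprK -/A mulr2n mulrDl mul1r.
Qed.

Lemma JgiG a h : \sum_(f < n) Jgi a f * g f h = J a h.
Proof.
rewrite /Jgi; under eq_bigr do rewrite big_distrl /=.
rewrite exchange_big /=.
under eq_bigr do (under eq_bigr do rewrite -mulrA; rewrite -big_distrr /= hgig).
by rewrite sum_delta_r.
Qed.


Lemma Q1_val d :
  \sum_(a < n) \sum_(f < n) Jgi a f * \sum_(h < n) J h d * (2 * beta a * g f h) = - (2 * beta d).
Proof.
transitivity (\sum_(a < n) 2 * beta a * \sum_(h < n) (\sum_(f < n) Jgi a f * g f h) * J h d).
  apply: eq_bigr => a _.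
  transitivity (\sum_(f < n) \sum_(h < n) 2 * beta a * (Jgi a f * g f h * J h d)).
    by apply: eq_bigr => f _; rewrite big_distrr; apply: eq_bigr => h _ /=; ring.
  rewrite exchange_big big_distrr; apply: eq_bigr => h _.
  by rewrite /= big_distrl big_distrr.
under eq_bigr do (under eq_bigr do rewrite JgiG; rewrite hJJ).
under eq_bigr do rewrite mulrN mulrC.
by rewrite sumrN sum_delta_r'.
Qed.

Lemma Q2_val d :
  \sum_(a < n) \sum_(f < n) Jgi a f * \sum_(h < n) J h d * KK f a h = YY d.
Proof.
transitivity (\sum_(c < n) \sum_(w < n) \sum_(b < n) \sum_(e < n) J c b * gi b w * J e d * KK w c e).
  apply: eq_bigr => c _; apply: eq_bigr => w _.
  rewrite /Jgi big_distrl; apply: eq_bigr => b _; rewrite /= big_distrr; apply: eq_bigr => e _ /=; ring.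
transitivity (\sum_(b < n) \sum_(c < n) \sum_(e < n) \sum_(w < n) J c b * gi b w * KK w c e * J e d); last first.
  apply: eq_bigr => b _; apply: eq_bigr => c _; apply: eq_bigr => e _.
  rewrite S_K big_distrr big_distrl; apply: eq_bigr => w _ /=; ring.
rewrite [X in _ = X]mv4; apply: eq_bigr => c _; rewrite [X in _ = X]mv3.
apply: eq_bigr => w _; apply: eq_bigr => b _; apply: eq_bigr => e _; ring.
Qed.

Lemma Q_val d : QQ d = - (2 * beta d) - YY d.
Proof.
have eK : forall h a f, KK h a f = 2 * beta a * g f h - KK f a h.
  by move=> h a f; rewrite -(Kconf a f h) addrK.
rewrite -Q1_val -Q2_val /QQ -sumrB; apply: eq_bigr => a _; rewrite -sumrB.
apply: eq_bigr => f _; rewrite -mulrBr -sumrB; congr (_ * _).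
by apply: eq_bigr => h _; rewrite eK mulrBr.
Qed.


Lemma contr1 (X : 'I_n -> 'I_n -> R) :
  \sum_(a < n) \sum_(c < n) J a c * (\sum_(e < n) \sum_(f < n) g a e * gi c f * X e f)
  = \sum_(e < n) \sum_(f < n) - J f e * X e f.
Proof.
transitivity (\sum_(a < n) \sum_(c < n) \sum_(e < n) \sum_(f < n) J a c * (g a e * gi c f * X e f)).
  by apply: eq_bigr => a _; apply: eq_bigr => c _; rewrite big_distrr; apply: eq_bigr => e _; rewrite big_distrr.
transitivity (\sum_(e < n) \sum_(f < n) \sum_(c < n) \sum_(a < n) g e a * J a c * gi c f * X e f); last first.
  apply: eq_bigr => e _; apply: eq_bigr => f _; rewrite -hgJgi big_distrl /=.
  by apply: eq_bigr => c _; rewrite !big_distrl.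
rewrite [X in X = _]mv4 [X in X = _]mv3.
apply: eq_bigr => e _; apply: eq_bigr => f _; apply: eq_bigr => c _; apply: eq_bigr => a _.
rewrite [g a e]hg; ring.
Qed.

Lemma P1P3 d :
  \sum_(a < n) \sum_(b < n) \sum_(c < n) J a c * J b d *
     (\sum_(e < n) \sum_(f < n) g a e * gi c f * TSS e f b)
  = \sum_(a < n) \sum_(b < n) \sum_(c < n) J a c * J b d * TSS c b a.
Proof.
rewrite [X in X = _]exchange_big [X in _ = X]exchange_big; apply: eq_bigr => b _.
transitivity (J b d * \sum_(a < n) \sum_(c < n) J a c *
     (\sum_(e < n) \sum_(f < n) g a e * gi c f * TSS e f b)).
  rewrite big_distrr; apply: eq_bigr => a _; rewrite big_distrr; apply: eq_bigr => c _ /=; ring.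
transitivity (J b d * \sum_(a < n) \sum_(c < n) J a c * TSS c b a); last first.
  rewrite big_distrr; apply: eq_bigr => a _; rewrite big_distrr; apply: eq_bigr => c _ /=; ring.
congr (_ * _); rewrite contr1 exchange_big; apply: eq_bigr => f _; apply: eq_bigr => e _.
rewrite /TSS; ring.
Qed.


Definition starS d := \sum_(c < n) S c c d + YY d.

Lemma Aform'_val d : Aform' TSS d = (n%:R - 2)^-1 * starS d - beta d.
Proof.
rewrite /Aform'.
have eT : \sum_(a < n) TSS a a d = \sum_(a < n) S a a d - n%:R * beta d.
  by rewrite /TSS sumrB trS.
have eB : \sum_(a < n) \sum_(b < n) \sum_(c < n) J a c * J b d *
     ( \sum_(e < n) \sum_(f < n) g a e * gi c f * TSS e f b
     - \sum_(e < n) \sum_(f < n) g b e * TSS e a f * gi f c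
     - TSS c b a) = 2 * (2 * beta d + YY d).
  transitivity ((\sum_(a < n) \sum_(b < n) \sum_(c < n) J a c * J b d *
     (\sum_(e < n) \sum_(f < n) g a e * gi c f * TSS e f b))
   - (\sum_(a < n) \sum_(b < n) \sum_(c < n) J a c * J b d *
     (\sum_(e < n) \sum_(f < n) g b e * TSS e a f * gi f c))
   - (\sum_(a < n) \sum_(b < n) \sum_(c < n) J a c * J b d * TSS c b a)).
    rewrite -!sumrB; apply: eq_bigr => a _; rewrite -!sumrB; apply: eq_bigr => b _.
    rewrite -!sumrB; apply: eq_bigr => c _; by rewrite !mulrBr.
  rewrite P1P3 P2_stage1 P2_stage2 P2_stage3 Q_val; ring.
rewrite eT eB /starS.
have h2 : (2 : R) != 0 by rewrite pnatr_eq0.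
field. exact: hn2.
Qed.

Lemma GT'_S : (forall d, starS d = 0) -> forall a b c, GT' TSS a b c = S a c b.
Proof.
move=> hs a b c.
have hA : forall d, Aform' TSS d = - beta d by move=> d; rewrite Aform'_val hs mulr0 sub0r.
have hTl : forall a b c, Tl TSS a b c = KK a b c - KK a c b.
  by move=> a' b' c'; rewrite /Tl /KK /TSS -sumrB; apply: eq_bigr => e _; rewrite mulrBr.
have eK : forall h a f, KK h a f = 2 * beta a * g f h - KK f a h.
  by move=> h a' f; rewrite -(Kconf a' f h) addrK.
have hG : forall e, GTlow' TSS e b c = KK e c b.
  move=> e; rewrite /GTlow' !hA !hTl.
  rewrite [KK c b e]eK [KK b e c]eK [KK b c e]eK [g c b]hg.
  have h2 : (2 : R) != 0 by rewrite pnatr_eq0.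
  field. done.
by rewrite /GT'; under eq_bigr do rewrite hG; rewrite -S_K.
Qed.

End Alg.


Section Alg2.
Variables (R : numFieldType) (n : nat) (g gi J : 'M[R]_n) (dg dJ : 'I_n -> 'I_n -> 'I_n -> R).
Hypothesis hg : forall a b, g a b = g b a.
Hypothesis hgis : forall a b, gi a b = gi b a.
Hypothesis hgig : forall a b, \sum_(d < n) gi a d * g d b = (a == b)%:R.
Hypothesis hggi : forall a b, \sum_(d < n) g a d * gi d b = (a == b)%:R.
Hypothesis hJJ : forall a b, \sum_(d < n) J a d * J d b = - (a == b)%:R.
Hypothesis hgJgi : forall e f, \sum_(c < n) (\sum_(a < n) g e a * J a c) * gi c f = - J f e.
Hypothesis hJgi : forall a b, \sum_(d < n) J a d * gi d b = - \sum_(d < n) J b d * gi d a.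
Hypothesis hn2 : (n%:R - 2 : R) != 0.
Hypothesis htr : \sum_(a < n) J a a = 0.
Hypothesis hJgJ : forall b a, \sum_(c < n) \sum_(e < n) J c b * g c e * J e a = g b a.
Hypothesis hdg : forall k a b, dg k a b = dg k b a.

Definition covJ' (G : 'I_n -> 'I_n -> 'I_n -> R) c a b :=
  dJ c a b + \sum_(d < n) G a c d * J d b - \sum_(d < n) G d c b * J a d.
Definition covg' (G : 'I_n -> 'I_n -> 'I_n -> R) c a b :=
  dg c a b - \sum_(d < n) G d c a * g d b - \sum_(d < n) G d c b * g a d.
Definition LC' a b c := 2^-1 * \sum_(d < n) gi a d * (dg b d c + dg c d b - dg d b c).
Definition Bform' a := (n%:R - 2)^-1 * \sum_(b < n) \sum_(c < n) J c b * covJ' LC' c b a.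
Definition Bup' b := \sum_(e < n) gi b e * Bform' e.
Definition Gamc' b a d := LC' b a d - Bform' a * (b == d)%:R + Bup' b * g a d
  - Bform' d * (b == a)%:R.
Definition Gcc' a b e := - 2^-1 * \sum_(f < n) J a f * covJ' Gamc' e f b.
Definition Ggc' a e b := Gamc' a e b + Gcc' a b e.

Lemma sum_dl (x : R) (F : 'I_n -> R) a : \sum_(d < n) x * (d == a)%:R * F d = x * F a.
Proof.
rewrite (bigD1 a) //= eqxx mulr1 big1 ?addr0 // => d /negbTE ->; by rewrite mulr0 mul0r.
Qed.

Lemma LC_g c a b : \sum_(d < n) LC' d c a * g d b = 2^-1 * (dg c b a + dg a b c - dg b c a).
Proof.
rewrite /LC'; under eq_bigr do rewrite -mulrA big_distrl /=.
rewrite -big_distrr /= exchange_big /=; congr (_ * _).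
under eq_bigr do (under eq_bigr do rewrite mulrAC; rewrite -big_distrl /=).
have hd : forall e, \sum_(d < n) gi d e * g d b = (e == b)%:R.
  by move=> e; rewrite -hgig; apply: eq_bigr => d _; rewrite hgis.
under eq_bigr do rewrite hd.
by rewrite sum_delta_r'.
Qed.

Lemma covg_LC c a b : covg' LC' c a b = 0.
Proof.
rewrite /covg' LC_g.
under [X in _ - _ - X]eq_bigr do rewrite [g _ _]hg.
rewrite LC_g (hdg c b a) (hdg a b c) (hdg b c a) (hdg b a c) (hdg a c b). field; done.
Qed.

Lemma Bup_g b : \sum_(d < n) Bup' d * g d b = Bform' b.
Proof.
rewrite /Bup'; under eq_bigr do rewrite big_distrl /=.
rewrite exchange_big /=.
under eq_bigr do (under eq_bigr do rewrite mulrAC; rewrite -big_distrl /=).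
have hd : forall e, \sum_(d < n) gi d e * g d b = (e == b)%:R.
  by move=> e; rewrite -hgig; apply: eq_bigr => d _; rewrite hgis.
under eq_bigr do rewrite hd.
by rewrite sum_delta_r'.
Qed.

Lemma GamcG c a b : \sum_(d < n) Gamc' d c a * g d b =
  \sum_(d < n) LC' d c a * g d b - Bform' c * g a b + g c a * Bform' b - Bform' a * g c b.
Proof.
rewrite /Gamc'; under eq_bigr do rewrite !(mulrDl, mulNr).
rewrite !big_split /= !sumrN !sum_dl.
congr (_ + _ + _ + _).
by rewrite -Bup_g big_distrr; apply: eq_bigr => d _ /=; ring.
Qed.

Lemma covg_Gamc c a b : covg' Gamc' c a b = 2 * Bform' c * g a b.
Proof.
rewrite /covg'.
under [X in _ - _ - X]eq_bigr do rewrite [g a _]hg.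
rewrite GamcG GamcG !LC_g.
rewrite (hdg c b a) (hdg a b c) (hdg b c a) (hdg b a c) (hdg a c b).
rewrite (hg c a) (hg c b) (hg b a).
field; done.
Qed.

Lemma sum_dr (x : R) (F : 'I_n -> R) a : \sum_(d < n) x * (a == d)%:R * F d = x * F a.
Proof. under eq_bigr do rewrite eq_sym; exact: sum_dl. Qed.

Definition gJ c a := \sum_(d < n) g c d * J d a.
Definition BJ a := \sum_(d < n) Bform' d * J d a.
Definition JB b := \sum_(d < n) J b d * Bup' d.

Lemma covJ_Gamc c b a : covJ' Gamc' c b a = covJ' LC' c b a + Bup' b * gJ c a
  - (b == c)%:R * BJ a - JB b * g c a + Bform' a * J b c.
Proof.
rewrite /covJ' /Gamc'.
under eq_bigr do rewrite !(mulrDl, mulNr).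
under [X in _ - X]eq_bigr do rewrite !(mulrDl, mulNr).
rewrite !big_split /= !sumrN !sum_dl !sum_dr.
have e1 : \sum_(i < n) Bup' b * g c i * J i a = Bup' b * gJ c a.
  by rewrite /gJ big_distrr; apply: eq_bigr => i _ /=; ring.
have e2 : \sum_(i < n) Bform' i * (b == c)%:R * J i a = (b == c)%:R * BJ a.
  by rewrite /BJ big_distrr; apply: eq_bigr => i _ /=; ring.
have e3 : \sum_(i < n) Bup' i * g c a * J b i = JB b * g c a.
  by rewrite /JB big_distrl; apply: eq_bigr => i _ /=; ring.
rewrite e1 e2 e3; ring.
Qed.

Lemma D2 a : \sum_(b < n) \sum_(c < n) J c b * covJ' Gamc' c b a = 0.
Proof.
have hL : \sum_(b < n) \sum_(c < n) J c b * covJ' LC' c b a = (n%:R - 2) * Bform' a.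
  by rewrite /Bform' mulrA mulfV // mul1r.
have t1 : \sum_(b < n) \sum_(c < n) J c b * (Bup' b * gJ c a) = Bform' a.
  rewrite -Bup_g; apply: eq_bigr => b _.
  rewrite -hJgJ big_distrr; apply: eq_bigr => c _ /=.
  rewrite /gJ mulrCA; congr (_ * _); rewrite big_distrr; apply: eq_bigr => e _ /=; ring.
have t2 : \sum_(b < n) \sum_(c < n) J c b * ((b == c)%:R * BJ a) = 0.
  transitivity (\sum_(b < n) J b b * BJ a); last by rewrite -big_distrl /= htr mul0r.
  apply: eq_bigr => b _; rewrite -(sum_delta_l (fun c => J c b * BJ a) b); apply: eq_bigr => c _ /=; ring.
have t3 : \sum_(b < n) \sum_(c < n) J c b * (JB b * g c a) = - Bform' a.
  rewrite exchange_big /= -Bup_g -sumrN; apply: eq_bigr => c _.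
  transitivity ((\sum_(b < n) J c b * JB b) * g c a).
    by rewrite big_distrl; apply: eq_bigr => b _ /=; ring.
  rewrite -mulNr; congr (_ * _).
  rewrite /JB; under eq_bigr do rewrite big_distrr /=.
  rewrite exchange_big /=.
  under eq_bigr do (under eq_bigr do rewrite mulrA; rewrite -big_distrl /= hJJ).
  by rewrite -sum_delta_l' -sumrN; apply: eq_bigr => d _; rewrite mulNr.
have t4 : \sum_(b < n) \sum_(c < n) J c b * (Bform' a * J b c) = - (n%:R * Bform' a).
  rewrite exchange_big /=.
  under eq_bigr do (under eq_bigr do rewrite mulrCA; rewrite -big_distrr /= hJJ eqxx).
  under eq_bigr do rewrite /= mulr1n mulrN1.
  by rewrite sumrN sumr_const card_ord mulr_natl.
transitivity (\sum_(b < n) \sum_(c < n) J c b * covJ' LC' c b a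
  + \sum_(b < n) \sum_(c < n) J c b * (Bup' b * gJ c a)
  - \sum_(b < n) \sum_(c < n) J c b * ((b == c)%:R * BJ a)
  - \sum_(b < n) \sum_(c < n) J c b * (JB b * g c a)
  + \sum_(b < n) \sum_(c < n) J c b * (Bform' a * J b c)).
  rewrite -big_split -sumrB -sumrB -big_split; apply: eq_bigr => b _.
  rewrite -big_split -sumrB -sumrB -big_split; apply: eq_bigr => c _.
  rewrite covJ_Gamc /=; generalize (covJ' LC' c b a) => L; ring.
rewrite hL t1 t2 t3 t4; ring.
Qed.

Definition tors (G : 'I_n -> 'I_n -> 'I_n -> R) a b c := G a b c - G a c b.
Definition VT' (T : 'I_n -> 'I_n -> 'I_n -> R) a b c :=
  \sum_(e < n) J a e * GT' g gi J T e b c + \sum_(e < n) GT' g gi J T a e c * J e b.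

Lemma Gamc_sym a b c : Gamc' a b c = Gamc' a c b.
Proof.
rewrite /Gamc' /LC' (hg b c).
have -> : \sum_(d < n) gi a d * (dg b d c + dg c d b - dg d b c)
  = \sum_(d < n) gi a d * (dg c d b + dg b d c - dg d c b).
  by apply: eq_bigr => d _; rewrite (hdg d b c); congr (_ * _); ring.
ring.
Qed.

Variables (Gam : 'I_n -> 'I_n -> 'I_n -> R) (B' : 'I_n -> R).
Hypothesis hGamJ : forall c a b, covJ' Gam c a b = 0.
Hypothesis hGamconf : forall c a b, covg' Gam c a b = 2 * B' c * g a b.

Definition SS a b c := Gam a b c - Gamc' a b c.
Definition bb c := Bform' c - B' c.

Lemma SS_conf c a b : \sum_(d < n) SS d c a * g d b + \sum_(d < n) SS d c b * g a d
   = 2 * bb c * g a b.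
Proof.
have h1 := hGamconf c a b; have h2 := covg_Gamc c a b; move: h1 h2; rewrite /covg' => h1 h2.
have e1 : \sum_(d < n) SS d c a * g d b = \sum_(d < n) Gam d c a * g d b - \sum_(d < n) Gamc' d c a * g d b.
  by rewrite -sumrB; apply: eq_bigr => d _; rewrite /SS mulrBl.
have e2 : \sum_(d < n) SS d c b * g a d = \sum_(d < n) Gam d c b * g a d - \sum_(d < n) Gamc' d c b * g a d.
  by rewrite -sumrB; apply: eq_bigr => d _; rewrite /SS mulrBl.
rewrite e1 e2.
move: h1 h2.
set X1 := \sum_(d < n) Gam d c a * g d b. set X2 := \sum_(d < n) Gam d c b * g a d.
set Y1 := \sum_(d < n) Gamc' d c a * g d b. set Y2 := \sum_(d < n) Gamc' d c b * g a d.
move=> h1 h2.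
have hX : X1 + X2 = dg c a b - 2 * B' c * g a b by rewrite -h1; ring.
have hY : Y1 + Y2 = dg c a b - 2 * Bform' c * g a b by rewrite -h2; ring.
transitivity ((X1 + X2) - (Y1 + Y2)); first by ring.
rewrite hX hY /bb; ring.
Qed.

Lemma covJ_diff c a b : covJ' Gam c a b - covJ' Gamc' c a b
  = \sum_(d < n) SS a c d * J d b - \sum_(d < n) SS d c b * J a d.
Proof.
rewrite /covJ'.
have e1 : \sum_(d < n) SS a c d * J d b = \sum_(d < n) Gam a c d * J d b - \sum_(d < n) Gamc' a c d * J d b.
  by rewrite -sumrB; apply: eq_bigr => d _; rewrite /SS mulrBl.
have e2 : \sum_(d < n) SS d c b * J a d = \sum_(d < n) Gam d c b * J a d - \sum_(d < n) Gamc' d c b * J a d.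
  by rewrite -sumrB; apply: eq_bigr => d _; rewrite /SS mulrBl.
rewrite e1 e2; ring.
Qed.

Lemma star_SS a : starS J SS a = 0.
Proof.
have h : \sum_(b < n) \sum_(c < n) J c b * (\sum_(d < n) SS b c d * J d a - \sum_(d < n) SS d c a * J b d) = 0.
  transitivity (\sum_(b < n) \sum_(c < n) J c b * covJ' Gam c b a
               - \sum_(b < n) \sum_(c < n) J c b * covJ' Gamc' c b a).
    rewrite -sumrB; apply: eq_bigr => b _; rewrite -sumrB; apply: eq_bigr => c _.
    by rewrite -covJ_diff mulrBr.
  rewrite D2; under eq_bigr do (under eq_bigr do rewrite hGamJ mulr0); rewrite !big1 ?subr0 //.
apply: (etrans _ h); rewrite /starS /YY.
have e2 : \sum_(b < n) \sum_(c < n) J c b * \sum_(d < n) SS d c a * J b d = - \sum_(c < n) SS c c a.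
  rewrite exchange_big /= -sumrN; apply: eq_bigr => c _.
  transitivity (\sum_(d < n) (\sum_(b < n) J c b * J b d) * SS d c a).
    transitivity (\sum_(b < n) \sum_(d < n) J c b * J b d * SS d c a).
      by apply: eq_bigr => b _; rewrite big_distrr; apply: eq_bigr => d _ /=; ring.
    by rewrite exchange_big /=; apply: eq_bigr => d _; rewrite big_distrl.
  under eq_bigr do rewrite hJJ mulNr.
  by rewrite sumrN sum_delta_l'.
have e1 : \sum_(b < n) \sum_(c < n) J c b * \sum_(d < n) SS b c d * J d a
   = \sum_(b < n) \sum_(c < n) \sum_(e < n) J c b * SS b c e * J e a.
  apply: eq_bigr => b _; apply: eq_bigr => c _; rewrite big_distrr; apply: eq_bigr => e _ /=; ring.
transitivity (\sum_(b < n) \sum_(c < n) J c b * \sum_(d < n) SS b c d * J d a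
   - \sum_(b < n) \sum_(c < n) J c b * \sum_(d < n) SS d c a * J b d); last first.
  rewrite -sumrB; apply: eq_bigr => b _; rewrite -sumrB; apply: eq_bigr => c _; by rewrite mulrBr.
rewrite e1 e2; ring.
Qed.

Lemma tors_SS : tors Gam = TSS SS.
Proof.
apply: funext => a; apply: funext => b; apply: funext => c.
by rewrite /tors /TSS /SS (Gamc_sym a b c); ring.
Qed.

Lemma GT_tors a b c : GT' g gi J (tors Gam) a b c = SS a c b.
Proof.
rewrite tors_SS; apply: (GT'_S hg hgis hgig hJJ hgJgi hJgi hn2 SS_conf star_SS).
Qed.

Lemma VT_formula a b c :
  VT' (tors Gam) a b c = 2 * \sum_(e < n) J a e * (Gam e c b - Ggc' e c b).
Proof.
rewrite /VT'.
have -> : \sum_(e < n) J a e * GT' g gi J (tors Gam) e b c = \sum_(e < n) J a e * SS e c b.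
  by apply: eq_bigr => e _; rewrite GT_tors.
have -> : \sum_(e < n) GT' g gi J (tors Gam) a e c * J e b = \sum_(e < n) SS a c e * J e b.
  by apply: eq_bigr => e _; rewrite GT_tors.
have hd := covJ_diff c a b; rewrite hGamJ sub0r in hd.
have e1 : \sum_(e < n) J a e * (Gam e c b - Ggc' e c b)
   = \sum_(e < n) J a e * SS e c b - 2^-1 * covJ' Gamc' c a b.
  rewrite /Ggc' /Gcc'.
  transitivity (\sum_(e < n) (J a e * SS e c b
        + 2^-1 * \sum_(f < n) J a e * J e f * covJ' Gamc' c f b)).
    apply: eq_bigr => e _; rewrite /SS.
    have -> : \sum_(f < n) J a e * J e f * covJ' Gamc' c f b
        = J a e * \sum_(f < n) J e f * covJ' Gamc' c f b.
      by rewrite big_distrr; apply: eq_bigr => f _ /=; rewrite mulrA.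
    move: (\sum_(f < n) J e f * covJ' Gamc' c f b) => Z; ring.
  rewrite big_split /=; congr (_ + _).
  rewrite -big_distrr /= exchange_big /=.
  under eq_bigr do rewrite -big_distrl /= hJJ mulNr.
  by rewrite sumrN sum_delta_l' mulrN.
have hd' : covJ' Gamc' c a b = \sum_(d < n) J a d * SS d c b - \sum_(d < n) SS a c d * J d b.
  rewrite -[LHS]opprK hd opprB; congr (_ - _); apply: eq_bigr => d _; exact: mulrC.
rewrite e1 hd'; field; done.
Qed.

Lemma pointwise_iff :
  (forall a b c, Gam a b c = Ggc' a b c) <-> (forall a b c, VT' (tors Gam) a b c = 0).
Proof.
split.
  move=> h a b c; rewrite VT_formula big1 ?mulr0 // => e _; by rewrite h subrr mulr0.
move=> h a c b.
set D := fun e => Gam e c b - Ggc' e c b.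
have h1 : forall a', \sum_(e < n) J a' e * D e = 0.
  move=> a'; have := h a' b c; rewrite VT_formula => /eqP.
  rewrite mulf_eq0 pnatr_eq0 /= => /eqP; done.
have h2 : \sum_(a' < n) J a a' * \sum_(e < n) J a' e * D e = - D a.
  transitivity (\sum_(e < n) (\sum_(a' < n) J a a' * J a' e) * D e).
    transitivity (\sum_(a' < n) \sum_(e < n) J a a' * J a' e * D e).
      by apply: eq_bigr => a' _; rewrite big_distrr; apply: eq_bigr => e _ /=; rewrite mulrA.
    by rewrite exchange_big /=; apply: eq_bigr => e _; rewrite big_distrl.
  under eq_bigr do rewrite hJJ mulNr.
  by rewrite sumrN sum_delta_l'.
have : D a = 0.
  apply/eqP; rewrite -oppr_eq0 -h2 big1 // => a' _; by rewrite h1 mulr0.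
by rewrite /D => /eqP; rewrite subr_eq0 => /eqP.
Qed.

End Alg2.


Section Mx.
Variables (R : numFieldType) (n : nat) (G J : 'M[R]_n).
Hypothesis hJ2 : J *m J = - 1%:M.
Hypothesis hgs : G^T = G.
Hypothesis hu : G \in unitmx.
Hypothesis hJo : J^T *m G *m J = G.

Lemma mx_m1 : J^T *m G = - (G *m J).
Proof.
have hJJ : J *m (- J) = 1%:M by rewrite mulmxN hJ2 opprK.
by rewrite -[LHS]mulmx1 -hJJ mulmxA hJo mulmxN.
Qed.
Lemma mx_m2 : G *m J *m invmx G = - J^T.
Proof.
have : J^T *m G *m invmx G = J^T by rewrite -mulmxA mulmxV // mulmx1.
by rewrite mx_m1 mulNmx => <-; rewrite opprK.
Qed.
Lemma mx_m3 : (J *m invmx G)^T = - (J *m invmx G).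
Proof.
rewrite trmx_mul trmx_inv hgs.
have -> : J^T = - (G *m J *m invmx G) by rewrite mx_m2 opprK.
by rewrite mulmxN !mulmxA mulVmx // mul1mx.
Qed.
Lemma mx_tr : \tr J = 0.
Proof.
set M := G *m J.
have hJ : J = invmx G *m M by rewrite /M mulmxA mulVmx // mul1mx.
have hM : M^T = - M by rewrite /M trmx_mul hgs mx_m1.
have he : \tr J = - \tr J.
  rewrite {1}hJ -mxtrace_tr trmx_mul hM trmx_inv hgs mulNmx linearN /= mxtrace_mulC -hJ //.
have h2 : (2 : R) != 0 by rewrite pnatr_eq0.
have : 2 * \tr J = 0 by rewrite mulr_natl mulr2n {2}he subrr.
by move/eqP; rewrite mulf_eq0 (negbTE h2) /= => /eqP.
Qed.

Lemma sc_g a b : G a b = G b a.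
Proof. by have := congr1 (fun M : 'M[R]_n => M a b) hgs; rewrite mxE => <-. Qed.
Lemma sc_gi a b : invmx G a b = invmx G b a.
Proof.
have : (invmx G)^T = invmx G by rewrite trmx_inv hgs.
by move/(congr1 (fun M : 'M[R]_n => M a b)); rewrite mxE => <-.
Qed.
Lemma sc_gig a b : \sum_(d < n) invmx G a d * G d b = (a == b)%:R.
Proof. by have := congr1 (fun M : 'M[R]_n => M a b) (mulVmx hu); rewrite !mxE. Qed.
Lemma sc_ggi a b : \sum_(d < n) G a d * invmx G d b = (a == b)%:R.
Proof. by have := congr1 (fun M : 'M[R]_n => M a b) (mulmxV hu); rewrite !mxE. Qed.
Lemma sc_JJ a b : \sum_(d < n) J a d * J d b = - (a == b)%:R.
Proof. by have := congr1 (fun M : 'M[R]_n => M a b) hJ2; rewrite !mxE. Qed.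
Lemma sc_gJgi e f : \sum_(c < n) (\sum_(a < n) G e a * J a c) * invmx G c f = - J f e.
Proof.
have := congr1 (fun M : 'M[R]_n => M e f) mx_m2; rewrite !mxE => <-.
by apply: eq_bigr => c _; rewrite mxE.
Qed.
Lemma sc_Jgi a b : \sum_(d < n) J a d * invmx G d b = - \sum_(d < n) J b d * invmx G d a.
Proof. by have := congr1 (fun M : 'M[R]_n => M b a) mx_m3; rewrite !mxE. Qed.
Lemma sc_tr : \sum_(a < n) J a a = 0.
Proof. exact: mx_tr. Qed.
Lemma sc_JgJ b a : \sum_(c < n) \sum_(e < n) J c b * G c e * J e a = G b a.
Proof.
have := congr1 (fun M : 'M[R]_n => M b a) hJo; rewrite !mxE => <-.
rewrite exchange_big /=; apply: eq_bigr => e _; rewrite mxE big_distrl /=.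
by apply: eq_bigr => c _; rewrite mxE.
Qed.

End Mx.

Local Open Scope classical_set_scope.
Theorem theorem4p12 (R : realType) (n : nat) (hn : (4 <= n)%N)
  (U : set 'rV[R]_n) (hU : open U)
  (J g : 'rV[R]_n -> 'M[R]_n) (Gam : 'rV[R]_n -> 'I_n -> 'I_n -> 'I_n -> R)
  (hJdiff : forall x, U x -> forall i j : 'I_n, differentiable (fun y => J y i j) x)
  (hgdiff : forall x, U x -> forall i j : 'I_n, differentiable (fun y => g y i j) x)
  (hJ2 : forall x, U x -> J x *m J x = - 1%:M)
  (hgsym : forall x, U x -> (g x)^T = g x)
  (hgpos : forall x, U x -> forall v : 'rV[R]_n, v != 0 -> 0 < (v *m g x *m v^T) 0 0)
  (hJorth : forall x, U x -> (J x)^T *m g x *m J x = g x)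
  (hGamJ : forall x, U x -> forall c a b : 'I_n, covJ Gam J x c a b = 0)
  (hGamconf : exists B' : 'rV[R]_n -> 'I_n -> R, forall x, U x ->
      forall c a b : 'I_n, covg Gam g x c a b = 2 * B' x c * g x a b) :
  (forall x, U x -> forall a b c : 'I_n, Gam x a b c = Gamma_gc g J x a b c)
  <->
  (forall x, U x -> forall a b c : 'I_n, VT g J (torsion Gam) x a b c = 0).
Proof.
have hdg : forall x, U x -> forall k a b : 'I_n,
    pd (fun y => g y a b) k x = pd (fun y => g y b a) k x.
  move=> x Ux k a b; rewrite /pd; apply: near_eq_derive.
  apply: (filterS _ (open_nbhs_nbhs (conj hU Ux))) => y Uy /=.
  by have := congr1 (fun M : 'M[R]_n => M b a) (hgsym y Uy); rewrite mxE.
have hunit : forall x, U x -> g x \in unitmx.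
  move=> x Ux; rewrite unitmxE unitfE; apply/negP => /det0P [v v0 hv].
  by have := hgpos x Ux v v0; rewrite hv mul0mx !mxE ltxx.
case: hGamconf => B' hB'.
have hn2 : (n%:R - 2 : R) != 0.
  rewrite -(@natrB R n 2); last by apply: leq_trans hn.
  by rewrite pnatr_eq0 subn_eq0 -ltnNge; apply: leq_trans hn.
have key : forall x, U x ->
  ((forall a b c : 'I_n, Gam x a b c = Gamma_gc g J x a b c) <->
   (forall a b c : 'I_n, VT g J (torsion Gam) x a b c = 0)).
  move=> x Ux.
  have hu := hunit x Ux.
  have e1 : forall a b c, VT g J (torsion Gam) x a b c = VT' (g x) (ginv g x) (J x) (tors (Gam x)) a b c := fun a b c => erefl.
  have e2 : forall a b c, Gamma_gc g J x a b c = Ggc' (g x) (ginv g x) (J x) (fun k a b => pd (fun y => g y a b) k x) (fun k a b => pd (fun y => J y a b) k x) a b c := fun a b c => erefl.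
  have e3 : forall c a b, covJ Gam J x c a b = covJ' (J x) (fun k a b => pd (fun y => J y a b) k x) (Gam x) c a b := fun c a b => erefl.
  have e4 : forall c a b, covg Gam g x c a b = covg' (g x) (fun k a b => pd (fun y => g y a b) k x) (Gam x) c a b := fun c a b => erefl.
  have P := (pointwise_iff (R:=R) (g:=g x) (gi:=ginv g x) (J:=J x)
     (dg := fun k a b => pd (fun y => g y a b) k x)
     (dJ := fun k a b => pd (fun y => J y a b) k x) (Gam:=Gam x) (B':=B' x)
     (sc_g (hgsym x Ux)) (sc_gi (hgsym x Ux)) (sc_gig hu) (sc_JJ (hJ2 x Ux))
     (sc_gJgi (hJ2 x Ux) hu (hJorth x Ux))
     (sc_Jgi (hJ2 x Ux) (hgsym x Ux) hu (hJorth x Ux)) hn2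
     (sc_tr (hJ2 x Ux) (hgsym x Ux) hu (hJorth x Ux))
     (sc_JgJ (hJorth x Ux)) (hdg x Ux) (hGamJ x Ux) (hB' x Ux)).
  split => h.
    move=> a b c; rewrite e1; apply: (proj1 P) => a' b' c'; rewrite -e2; exact: h.
  move=> a b c; rewrite e2; apply: (proj2 P) => a' b' c'; rewrite -e1; exact: h.
split.
  by move=> h x Ux; apply/(key x Ux)/h.
by move=> h x Ux; apply/(key x Ux)/h.
Qed.
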